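(* For any $R>0$ and $\varphi_0>0$ there exists a unique smooth solution $\varphi(r)$ on $[R,\infty)$ of the problem $$\varphi'(r)=(1+\varphi(r)^2)\big(2-\varphi(r)\coth r\big),\qquad \varphi(R)=\varphi_0.$$ Moreover, $\lim_{r\to\infty}\varphi(r)=2$.
   Context: (This ODE is the equation satisfied by $\varphi=f'$ when the rotational graph $z=f(r)$, $r$ being the hyperbolic distance to a fixed point of $\mathbb{H}^2$, is a translating soliton in $\mathbb{H}^2\times\mathbb{R}$, i.e. has mean curvature equal to its angle function.) *)

(* Defs.v *)
From Stdlib Require Import Reals.
From Coquelicot Require Import Coquelicot.
Open Scope R_scope.

Definition coth (x : R) : R := cosh x / sinh x.

(* "phi is smooth on [R0, +oo)": phi is C^oo on an open neighbourhood
   (R0 - eps, +oo) of the closed half-line (every iterated derivative exists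
   at every point of that open set). *)
Definition smooth_on_half_line (R0 : R) (phi : R -> R) : Prop :=
  exists eps : R, 0 < eps /\
    forall (n : nat) (x : R), R0 - eps < x -> ex_derive_n phi n x.

Definition solves_ivp (R0 phi0 : R) (phi : R -> R) : Prop :=
  phi R0 = phi0 /\
  forall r : R, R0 <= r ->
    is_derive phi r ((1 + (phi r) ^ 2) * (2 - phi r * coth r)).

(* Main.v *)
Require Import Defs.
From Stdlib Require Import Reals Lra Lia Psatz Classical.
From Coquelicot Require Import Coquelicot.
Open Scope R_scope.

Lemma exp_pos' x : 0 < exp x. Proof. apply exp_pos. Qed.

Lemma coth_alt x : 0 < x -> coth x = 1 + 2 / (exp x * exp x - 1).
Proof.
  intros Hx. unfold coth, cosh, sinh. rewrite exp_Ropp.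
  assert (H1 : 1 < exp x) by (rewrite <- exp_0; apply exp_increasing; lra).
  assert (exp x * exp x - 1 <> 0) by nra.
  field. split; [nra|]. lra.
Qed.

Lemma exp_gt1 x : 0 < x -> 1 < exp x.
Proof. intros; rewrite <- exp_0; apply exp_increasing; lra. Qed.

Lemma coth_gt1 x : 0 < x -> 1 < coth x.
Proof.
  intros Hx. rewrite coth_alt by lra. pose proof (exp_gt1 x Hx).
  assert (0 < 2 / (exp x * exp x - 1)). { apply Rdiv_lt_0_compat; nra. } lra.
Qed.

Lemma coth_decr x y : 0 < y -> y <= x -> coth x <= coth y.
Proof.
  intros Hy Hyx. rewrite !coth_alt by lra.
  pose proof (exp_gt1 y Hy).
  assert (exp y <= exp x). { destruct (Req_dec x y). subst; lra. left; apply exp_increasing; lra. }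
  assert (0 < exp y * exp y - 1) by nra.
  assert (exp y * exp y - 1 <= exp x * exp x - 1) by nra.
  apply Rplus_le_compat_l. unfold Rdiv. apply Rmult_le_compat_l; [lra|].
  apply Rinv_le_contravar; lra.
Qed.

Lemma coth_small d x : 0 < d -> 0 < x -> 1 / d <= x -> coth x <= 1 + d.
Proof.
  intros Hd Hx Hdx. rewrite coth_alt by lra.
  assert (H : 1 + 2 * x < exp (2 * x)) by (apply exp_ineq1; lra).
  replace (2 * x) with (x + x) in H by ring. rewrite exp_plus in H.
  assert (2 / d <= 2 * x). { unfold Rdiv in *. nra. }
  assert (0 < exp x * exp x - 1) by lra.
  apply Rplus_le_compat_l. apply Rle_div_l; [lra|].
  assert (1 <= d * x). { apply (Rmult_le_compat_l d) in Hdx; [|lra]. field_simplify in Hdx; lra. }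
  nra.
Qed.

Lemma coth_derive x : 0 < x -> is_derive coth x (1 - coth x ^ 2).
Proof.
  intros Hx. unfold coth, cosh, sinh.
  pose proof (exp_gt1 x Hx). rewrite exp_Ropp.
  assert (0 < / exp x < 1). { split. apply Rinv_0_lt_compat; lra. rewrite <- Rinv_1. apply Rinv_lt_contravar; lra. }
  auto_derive.
  - rewrite exp_Ropp. lra.
  - rewrite exp_Ropp. field. split; nra.
Qed.

Definition Fp (t u : R) : R := (1 + u ^ 2) * (2 - u * t).

Lemma Fp_lip t T B u1 u2 : 0 <= t <= T -> Rabs u1 <= B -> Rabs u2 <= B ->
  Rabs (Fp t u1 - Fp t u2) <= (4 * B + T + 3 * T * B ^ 2) * Rabs (u1 - u2).
Proof.
  intros Ht H1 H2. unfold Fp.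
  replace ((1 + u1 ^ 2) * (2 - u1 * t) - (1 + u2 ^ 2) * (2 - u2 * t)) with
    ((2 * (u1 + u2) - t - t * (u1 ^ 2 + u1 * u2 + u2 ^ 2)) * (u1 - u2)) by ring.
  rewrite Rabs_mult. apply Rmult_le_compat_r; [apply Rabs_pos|].
  apply Rabs_le_between in H1. apply Rabs_le_between in H2. apply Rabs_le.
  assert (0 <= B) by lra.
  assert (u1 ^ 2 <= B ^ 2) by nra. assert (u2 ^ 2 <= B ^ 2) by nra.
  assert (H5 : Rabs (u1 * u2) <= B ^ 2). { rewrite Rabs_mult. simpl. rewrite Rmult_1_r. apply Rmult_le_compat; try apply Rabs_pos; apply Rabs_le; lra. }
  apply Rabs_le_between in H5.
  assert (0 <= u1 ^ 2) by nra. assert (0 <= u2 ^ 2) by nra.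
  assert (-(B^2) <= u1 ^ 2 + u1 * u2 + u2 ^ 2 <= 3 * B ^ 2) by lra.
  assert (t * (u1 ^ 2 + u1 * u2 + u2 ^ 2) <= T * (3 * B ^ 2)) by nra.
  assert (- (T * (3 * B ^2)) <= t * (u1 ^ 2 + u1 * u2 + u2 ^ 2)) by nra.
  split; nra.
Qed.

Lemma Fp_bound t T u B : 0 <= t <= T -> 0 <= u <= B ->
  Rabs (Fp t u) <= (1 + B ^ 2) * (2 + B * T).
Proof.
  intros Ht Hu. unfold Fp. rewrite Rabs_mult.
  apply Rmult_le_compat; try apply Rabs_pos.
  - rewrite Rabs_pos_eq by nra. nra.
  - apply Rabs_le. split; nra.
Qed.

Definition clamp (M y : R) : R := Rmax 0 (Rmin M y).

Lemma clamp_range M y : 0 <= M -> 0 <= clamp M y <= M.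
Proof. intros. unfold clamp, Rmax, Rmin. repeat destruct Rle_dec; lra. Qed.

Lemma clamp_lip M y1 y2 : Rabs (clamp M y1 - clamp M y2) <= Rabs (y1 - y2).
Proof. unfold clamp, Rmax, Rmin. apply Rabs_le. repeat destruct Rle_dec; try (split; apply Rabs_le in r || idtac; unfold Rabs; destruct Rcase_abs; lra);
  unfold Rabs; destruct Rcase_abs; lra. Qed.

Lemma clamp_id M y : 0 <= y <= M -> clamp M y = y.
Proof. intros. unfold clamp, Rmax, Rmin. repeat destruct Rle_dec; lra. Qed.

Lemma clamp_top M y : 0 <= M -> M <= y -> clamp M y = M.
Proof. intros. unfold clamp, Rmax, Rmin. repeat destruct Rle_dec; lra. Qed.

Lemma clamp_le M y : 0 <= M -> clamp M y <= Rmax 0 y.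
Proof. intros. unfold clamp, Rmax, Rmin. repeat destruct Rle_dec; lra. Qed.

Lemma lip_cont (f : R -> R) x k : 0 <= k ->
  (forall y, Rabs (f y - f x) <= k * Rabs (y - x)) -> continuous f x.
Proof.
  intros Hk H. apply continuity_pt_filterlim.
  intros eps Heps. exists (eps / (k + 1)). split.
  - apply Rdiv_lt_0_compat; lra.
  - intros y [_ Hy]. simpl in *. unfold R_dist in *.
    eapply Rle_lt_trans; [apply H|].
    assert (Hd : Rabs (y - x) * (k + 1) < eps).
    { apply (Rmult_lt_compat_r (k+1)) in Hy; [|lra]. field_simplify in Hy; [|lra]. lra. }
    pose proof (Rabs_pos (y - x)). nra.
Qed.

Lemma RInt_bound (f : R -> R) a b Mb :
  (forall t, continuous f t) ->
  (forall t, Rmin a b <= t <= Rmax a b -> Rabs (f t) <= Mb) ->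
  Rabs (RInt f a b) <= Mb * Rabs (b - a).
Proof.
  intros Hc Hb.
  destruct (Rle_dec a b) as [Hab|Hab].
  - rewrite (Rabs_pos_eq (b - a)) by lra. rewrite Rmult_comm. apply abs_RInt_le_const; auto.
    + apply (ex_RInt_continuous (V:=R_CompleteNormedModule)); auto.
    + intros t Ht. apply Hb. rewrite Rmin_left, Rmax_right; lra.
  - rewrite <- opp_RInt_swap by (apply (ex_RInt_continuous (V:=R_CompleteNormedModule)); auto).
    rewrite (Rabs_left (b - a)) by lra.
    change (opp (RInt f b a)) with (- RInt f b a). rewrite Rabs_Ropp.
    replace (- (b - a)) with (a - b) by ring. rewrite Rmult_comm.
    apply abs_RInt_le_const; auto. lra.
    + apply (ex_RInt_continuous (V:=R_CompleteNormedModule)); auto.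
    + intros t Ht. apply Hb. rewrite Rmin_right, Rmax_left; lra.
Qed.

Lemma RInt_pow_bound (f : R -> R) c r C k :
  (forall t, continuous f t) ->
  (forall t, Rmin c r <= t <= Rmax c r -> Rabs (f t) <= C * Rabs (t - c) ^ k) ->
  Rabs (RInt f c r) <= C * Rabs (r - c) ^ (S k) / INR (S k).
Proof.
  intros Hc Hb.
  assert (HS : 0 < INR (S k)) by (apply lt_0_INR; lia).
  assert (Hm : forall a b : R, minus a b = a - b) by reflexivity.
  destruct (Rle_dec c r) as [Hcr|Hcr].
  - rewrite Rmin_left, Rmax_right in Hb by lra.
    eapply Rle_trans; [apply abs_RInt_le; [lra| apply (ex_RInt_continuous (V:=R_CompleteNormedModule)); auto]|].
    assert (Hi : is_RInt (fun t => C * (t - c) ^ k) c r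
                 (minus (C * (r - c) ^ (S k) / INR (S k)) (C * (c - c) ^ (S k) / INR (S k)))).
      { apply (is_RInt_derive (fun t => C * (t - c) ^ (S k) / INR (S k))).
        - intros x _. set (N := INR (S k)). auto_derive; auto. change (match k with | 0%nat => 1 | S _ => INR k + 1 end) with N. assert (0 < N) by (unfold N; lra). clearbody N. replace (x + - c) with (x - c) by ring. set (X := (x - c) ^ k). field. lra.
        - intros x _. apply (ex_derive_continuous (fun t => C * (t - c) ^ k)). auto_derive; auto. }
      rewrite (Rabs_pos_eq (r - c)) by lra.
      replace (C * (r - c) ^ S k / INR (S k)) with (RInt (fun t => C * (t - c) ^ k) c r).
      2:{ rewrite (is_RInt_unique _ _ _ _ Hi). rewrite Hm.
          replace (c - c) with 0 by ring. rewrite pow_i by lia. rewrite Rmult_0_r; unfold Rdiv; rewrite Rmult_0_l; lra. }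
      apply RInt_le; auto.
      * apply (ex_RInt_continuous (V:=R_CompleteNormedModule)); intros; apply continuous_Rabs_comp; auto.
      * eexists; eauto.
      * intros x Hx. specialize (Hb x ltac:(lra)). rewrite (Rabs_pos_eq (x - c)) in Hb by lra. exact Hb.
  - rewrite Rmin_right, Rmax_left in Hb by lra.
    rewrite <- opp_RInt_swap by (apply (ex_RInt_continuous (V:=R_CompleteNormedModule)); auto).
    change (opp (RInt f r c)) with (- RInt f r c). rewrite Rabs_Ropp.
    eapply Rle_trans; [apply abs_RInt_le; [lra| apply (ex_RInt_continuous (V:=R_CompleteNormedModule)); auto]|].
    assert (Hi : is_RInt (fun t => C * (c - t) ^ k) r c
                 (minus (- (C * (c - c) ^ (S k) / INR (S k))) (- (C * (c - r) ^ (S k) / INR (S k))))).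
      { apply (is_RInt_derive (fun t => - (C * (c - t) ^ (S k) / INR (S k)))).
        - intros x _. set (N := INR (S k)). auto_derive; auto. change (match k with | 0%nat => 1 | S _ => INR k + 1 end) with N. assert (0 < N) by (unfold N; lra). clearbody N. replace (c + - x) with (c - x) by ring. set (X := (c - x) ^ k). field. lra.
        - intros x _. apply (ex_derive_continuous (fun t => C * (c - t) ^ k)). auto_derive; auto. }
      rewrite (Rabs_left (r - c)) by lra. replace (- (r - c)) with (c - r) by ring.
      replace (C * (c - r) ^ S k / INR (S k)) with (RInt (fun t => C * (c - t) ^ k) r c).
      2:{ rewrite (is_RInt_unique _ _ _ _ Hi). rewrite Hm.
          replace (c - c) with 0 by ring. rewrite pow_i by lia. rewrite Rmult_0_r; unfold Rdiv; rewrite Rmult_0_l; lra. }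
      apply RInt_le; [lra| | |].
      * apply (ex_RInt_continuous (V:=R_CompleteNormedModule)); intros; apply continuous_Rabs_comp; auto.
      * eexists; eauto.
      * intros x Hx. specialize (Hb x ltac:(lra)). rewrite (Rabs_left1 (x - c)) in Hb by lra.
        replace (- (x - c)) with (c - x) in Hb by ring. exact Hb.
Qed.

Lemma decr_lemma (h dh : R -> R) a b : a <= b ->
  (forall x, a <= x <= b -> is_derive h x (dh x)) ->
  (forall x, a <= x <= b -> dh x <= 0) -> h b <= h a.
Proof.
  intros Hab Hd Hn. destruct (Req_dec a b) as [->|Hne]; [lra|].
  destruct (MVT_cor2 h dh a b) as [c [Hc1 Hc2]]; [lra| |].
  - intros c Hc. apply is_derive_Reals. apply Hd; lra.
  - assert (dh c <= 0) by (apply Hn; lra). nra.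
Qed.

Lemma tabs_ineq x h : Rabs ((x + h) * Rabs (x + h) - x * Rabs x - 2 * Rabs x * h) <= h * h.
Proof.
  unfold Rabs at 2 3 4. repeat destruct Rcase_abs; apply Rabs_le; split; nra.
Qed.

Lemma tabs_derive x : is_derive (fun t => t * Rabs t) x (2 * Rabs x).
Proof.
  apply is_derive_Reals. intros eps Heps. exists (mkposreal eps Heps).
  intros h Hh0 Hh. simpl in Hh.
  pose proof (tabs_ineq x h) as H.
  replace (((x + h) * Rabs (x + h) - x * Rabs x) / h - 2 * Rabs x) with
    (((x + h) * Rabs (x + h) - x * Rabs x - 2 * Rabs x * h) / h) by (field; auto).
  unfold Rdiv. rewrite Rabs_mult, Rabs_inv.
  apply (Rmult_le_compat_r (/ Rabs h)) in H; [|left; apply Rinv_0_lt_compat; apply Rabs_pos_lt; auto].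
  eapply Rle_lt_trans; [exact H|].
  replace (h * h * / Rabs h) with (Rabs h); [lra|].
  assert (Hs : h * h = Rabs h * Rabs h) by (unfold Rabs; destruct Rcase_abs; ring). rewrite Hs. field. apply Rabs_no_R0; auto.
Qed.

Lemma barrier (f df : R -> R) a b c : a <= b ->
  (forall x, a <= x <= b -> is_derive f x (df x)) ->
  f a <= c ->
  (forall x, a <= x <= b -> c < f x -> df x <= 0) ->
  f b <= c.
Proof.
  intros Hab Hd Ha Hn.
  set (q := fun t => t * t + t * Rabs t).
  assert (Hq : forall x, a <= x <= b ->
     is_derive (fun x => q (f x - c)) x ((2 * (f x - c) + 2 * Rabs (f x - c)) * df x)).
  { intros x Hx. unfold q.
    assert (Hf : is_derive (fun x => f x - c) x (df x)).
    { evar_last. apply @is_derive_minus. apply Hd; auto. apply is_derive_const. simpl. unfold minus, plus, opp, zero; simpl. ring. }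
    evar_last.
    - apply @is_derive_plus.
      + apply (is_derive_mult (fun x => f x - c) (fun x => f x - c)); [exact Hf | exact Hf | intros; apply Rmult_comm].
      + apply (is_derive_comp (fun t => t * Rabs t) (fun x => f x - c)); [apply tabs_derive | exact Hf].
    - simpl. unfold plus, scal, mult; simpl. unfold mult; simpl. ring. }
  assert (H : q (f b - c) <= q (f a - c)).
  { apply (decr_lemma _ _ a b Hab Hq). intros x Hx.
    destruct (Rle_dec (f x) c).
    + rewrite Rabs_left1 by lra. nra.
    + rewrite Rabs_pos_eq by lra. assert (df x <= 0) by (apply Hn; lra). nra. }
  unfold q in H. rewrite (Rabs_left1 (f a - c)) in H by lra.
  destruct (Rle_dec (f b) c); auto.
  rewrite Rabs_pos_eq in H by lra. nra.
Qed.

Definition Mc (phi0 : R) := Rmax (2 * phi0) 2.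
Definition C1 (R0 : R) := coth (R0 / 2).
Definition G (R0 phi0 s y : R) := Fp (coth (Rmax (R0 / 2) s)) (clamp (Mc phi0) y).
Definition Kc (R0 phi0 : R) := (1 + Mc phi0 ^ 2) * (2 + Mc phi0 * C1 R0).
Definition Lc (R0 phi0 : R) := 4 * Mc phi0 + C1 R0 + 3 * C1 R0 * Mc phi0 ^ 2.

Lemma Mc_ge2 phi0 : 2 <= Mc phi0.
Proof. unfold Mc. apply Rmax_r. Qed.

Lemma coth_range R0 s : 0 < R0 -> 0 <= coth (Rmax (R0 / 2) s) <= C1 R0.
Proof.
  intros H. assert (R0 / 2 <= Rmax (R0 / 2) s) by apply Rmax_l.
  split.
  - left. apply Rlt_trans with 1; [lra|]. apply coth_gt1. lra.
  - apply coth_decr; lra.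
Qed.

Lemma C1_gt1 R0 : 0 < R0 -> 1 < C1 R0.
Proof. intros. apply coth_gt1. lra. Qed.

Lemma Kc_pos R0 phi0 : 0 < R0 -> 0 < Kc R0 phi0.
Proof. intros. unfold Kc. pose proof (Mc_ge2 phi0). pose proof (C1_gt1 R0 H). apply Rmult_lt_0_compat; nra. Qed.

Lemma Lc_pos R0 phi0 : 0 < R0 -> 0 < Lc R0 phi0.
Proof. intros. unfold Lc. pose proof (Mc_ge2 phi0). pose proof (C1_gt1 R0 H). nra. Qed.

Lemma G_bound R0 phi0 s y : 0 < R0 -> Rabs (G R0 phi0 s y) <= Kc R0 phi0.
Proof.
  intros H. unfold G, Kc. apply Fp_bound.
  - apply coth_range; auto.
  - apply clamp_range. pose proof (Mc_ge2 phi0); lra.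
Qed.

Lemma G_lip R0 phi0 s y1 y2 : 0 < R0 ->
  Rabs (G R0 phi0 s y1 - G R0 phi0 s y2) <= Lc R0 phi0 * Rabs (y1 - y2).
Proof.
  intros H. unfold G, Lc. pose proof (Mc_ge2 phi0).
  apply Rle_trans with ((4 * Mc phi0 + C1 R0 + 3 * C1 R0 * Mc phi0 ^ 2) *
    Rabs (clamp (Mc phi0) y1 - clamp (Mc phi0) y2)); [apply Fp_lip|].
  - apply coth_range; auto.
  - pose proof (clamp_range (Mc phi0) y1 ltac:(lra)). rewrite Rabs_pos_eq; lra.
  - pose proof (clamp_range (Mc phi0) y2 ltac:(lra)). rewrite Rabs_pos_eq; lra.
  - apply Rmult_le_compat_l; [pose proof (C1_gt1 R0 H); nra|]. apply clamp_lip.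
Qed.

Lemma cont_Fp (t u : R -> R) x : continuous t x -> continuous u x ->
  continuous (fun s => Fp (t s) (u s)) x.
Proof.
  intros Ht Hu. unfold Fp.
  apply (continuous_mult (fun s => 1 + u s ^ 2) (fun s => 2 - u s * t s)).
  - apply (continuous_plus (fun _ => 1) (fun s => u s ^ 2)). apply continuous_const.
    simpl. apply (continuous_mult u (fun s => u s * 1)); auto.
    apply (continuous_mult u (fun _ => 1)); auto. apply continuous_const.
  - apply (continuous_minus (fun _ => 2) (fun s => u s * t s)). apply continuous_const.
    apply (continuous_mult u t); auto.
Qed.

Lemma G_cont R0 phi0 (h : R -> R) x : 0 < R0 -> continuous h x ->
  continuous (fun s => G R0 phi0 s (h s)) x.
Proof.
  intros HR Hh. unfold G. apply (cont_Fp (fun s => coth (Rmax (R0 / 2) s)) (fun s => clamp (Mc phi0) (h s))).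
  - apply (continuous_comp (fun s => Rmax (R0 / 2) s) coth).
    + apply (lip_cont _ _ 1); [lra|]. intros y. rewrite Rmult_1_l.
      unfold Rmax. repeat destruct Rle_dec; unfold Rabs; repeat destruct Rcase_abs; lra.
    + apply (@ex_derive_continuous R_AbsRing R_NormedModule coth). eexists. apply coth_derive.
      apply Rlt_le_trans with (R0/2); [lra| apply Rmax_l].
  - apply (continuous_comp h (clamp (Mc phi0))); auto.
    apply (lip_cont _ _ 1); [lra|]. intros y. rewrite Rmult_1_l. apply clamp_lip.
Qed.

Fixpoint pic (R0 phi0 : R) (n : nat) : R -> R :=
  match n with
  | O => fun _ => phi0
  | S n => fun r => phi0 + RInt (fun s => G R0 phi0 s (pic R0 phi0 n s)) R0 r
  end.

Lemma pic_lip_cont R0 phi0 n : 0 < R0 ->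
  (forall x y, Rabs (pic R0 phi0 n x - pic R0 phi0 n y) <= Kc R0 phi0 * Rabs (x - y)) /\
  (forall x, continuous (pic R0 phi0 n) x).
Proof.
  intros HR. pose proof (Kc_pos R0 phi0 HR) as HK.
  assert (Hlc : forall f : R -> R, (forall x y, Rabs (f x - f y) <= Kc R0 phi0 * Rabs (x - y)) ->
            forall x, continuous f x).
  { intros f Hf x. apply (lip_cont _ _ (Kc R0 phi0)); [lra|]. intros; apply Hf. }
  induction n as [|n [IH1 IH2]].
  - assert (H : forall x y, Rabs (pic R0 phi0 0 x - pic R0 phi0 0 y) <= Kc R0 phi0 * Rabs (x - y)).
    { intros x y. simpl. rewrite Rminus_diag, Rabs_R0. pose proof (Rabs_pos (x - y)). nra. }
    split; auto.
  - assert (Hg : forall t, continuous (fun s => G R0 phi0 s (pic R0 phi0 n s)) t).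
    { intros t. apply G_cont; auto. }
    assert (Hex : forall a b, ex_RInt (fun s => G R0 phi0 s (pic R0 phi0 n s)) a b).
    { intros a b. apply (ex_RInt_continuous (V:=R_CompleteNormedModule)). intros; auto. }
    assert (H : forall x y, Rabs (pic R0 phi0 (S n) x - pic R0 phi0 (S n) y) <= Kc R0 phi0 * Rabs (x - y)).
    { intros x y. simpl.
      rewrite <- (RInt_Chasles (fun s => G R0 phi0 s (pic R0 phi0 n s)) R0 y x) by auto.
      change (plus ?a ?b) with (a + b).
      assert (E : forall u v w : R, u + (v + w) - (u + v) = w) by (intros; ring).
      rewrite E.
      apply RInt_bound; auto. intros; apply G_bound; auto. }
    split; auto.
Qed.

Lemma pic_cont R0 phi0 n x : 0 < R0 -> continuous (pic R0 phi0 n) x.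
Proof. intros H. apply (pic_lip_cont R0 phi0 n H). Qed.

Lemma Gpic_cont R0 phi0 n x : 0 < R0 -> continuous (fun s => G R0 phi0 s (pic R0 phi0 n s)) x.
Proof. intros H. apply G_cont; auto. apply pic_cont; auto. Qed.

Lemma Gpic_ex R0 phi0 n a b : 0 < R0 -> ex_RInt (fun s => G R0 phi0 s (pic R0 phi0 n s)) a b.
Proof. intros H. apply (ex_RInt_continuous (V:=R_CompleteNormedModule)). intros; apply Gpic_cont; auto. Qed.

Lemma pic_diff R0 phi0 k s : 0 < R0 ->
  Rabs (pic R0 phi0 (S k) s - pic R0 phi0 k s) <=
  Kc R0 phi0 * Lc R0 phi0 ^ k * Rabs (s - R0) ^ (S k) / INR (Factorial.fact (S k)).
Proof.
  intros HR. revert s. induction k as [|k IH]; intros s.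
  - simpl pic. assert (E1 : forall u v : R, u + v - u = v) by (intros; ring). rewrite E1.
    simpl. rewrite !Rmult_1_r, Rdiv_1_r.
    apply RInt_bound. intros; apply G_cont; auto; apply continuous_const.
    intros; apply G_bound; auto.
  - change (pic R0 phi0 (S (S k)) s) with (phi0 + RInt (fun s => G R0 phi0 s (pic R0 phi0 (S k) s)) R0 s).
    change (pic R0 phi0 (S k) s) with (phi0 + RInt (fun s => G R0 phi0 s (pic R0 phi0 k s)) R0 s).
    assert (E2 : forall u v w : R, u + v - (u + w) = v - w) by (intros; ring).
    rewrite E2.
    assert (HM : RInt (fun x => G R0 phi0 x (pic R0 phi0 (S k) x) - G R0 phi0 x (pic R0 phi0 k x)) R0 s =
       RInt (fun x => G R0 phi0 x (pic R0 phi0 (S k) x)) R0 s - RInt (fun x => G R0 phi0 x (pic R0 phi0 k x)) R0 s).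
    { apply (RInt_minus (V:=R_CompleteNormedModule)); apply Gpic_ex; auto. }
    rewrite <- HM.
    set (Q := INR (Factorial.fact (S k))).
    replace (Kc R0 phi0 * Lc R0 phi0 ^ S k * Rabs (s - R0) ^ S (S k) / INR (Factorial.fact (S (S k))))
      with ((Lc R0 phi0 * Kc R0 phi0 * Lc R0 phi0 ^ k / Q) * Rabs (s - R0) ^ S (S k) / INR (S (S k))).
    2:{ unfold Q. rewrite (fact_simpl (S k)), mult_INR. change (Lc R0 phi0 ^ S k) with (Lc R0 phi0 * Lc R0 phi0 ^ k).
        assert (0 < INR (Factorial.fact (S k))) by (apply INR_fact_lt_0).
        assert (0 < INR (S (S k))) by (apply lt_0_INR; lia).
        set (A := INR (Factorial.fact (S k))) in *. set (B := Lc R0 phi0 ^ k). set (D := Rabs (s - R0) ^ S (S k)).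
        clearbody A B D. field. split; lra. }
    apply RInt_pow_bound.
    + intros t. apply (continuous_minus (fun s => G R0 phi0 s (pic R0 phi0 (S k) s))
                        (fun s => G R0 phi0 s (pic R0 phi0 k s))); apply Gpic_cont; auto.
    + intros t _. change (minus ?a ?b) with (a - b).
      eapply Rle_trans; [apply G_lip; auto|].
      specialize (IH t). pose proof (Lc_pos R0 phi0 HR).
      apply (Rmult_le_compat_l (Lc R0 phi0)) in IH; [|lra].
      eapply Rle_trans; [exact IH|]. right. unfold Q. field.
      pose proof (INR_fact_lt_0 (S k)); lra.
Qed.

Definition Es (n : nat) (x : R) := sum_f_R0 (fun i => / INR (Factorial.fact i) * x ^ i) n.

Lemma Es_cv x : Un_cv (fun n => Es n x) (exp x).
Proof. exact (proj2_sig (exist_exp x)). Qed.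

Lemma Es_S n x : Es (S n) x = Es n x + / INR (Factorial.fact (S n)) * x ^ (S n).
Proof. unfold Es. apply tech5. Qed.

Lemma Es_mono n m x : 0 <= x -> (n <= m)%nat -> Es n x <= Es m x.
Proof.
  intros Hx Hnm. induction Hnm; [lra|]. rewrite Es_S.
  assert (0 <= / INR (Factorial.fact (S m)) * x ^ S m).
  { apply Rmult_le_pos. left; apply Rinv_0_lt_compat, INR_fact_lt_0. apply pow_le; auto. }
  lra.
Qed.

Lemma Es_le_exp n x : 0 <= x -> Es n x <= exp x.
Proof.
  intros Hx. apply (growing_ineq (fun n => Es n x)); [|apply Es_cv].
  intros k. apply Es_mono; auto.
Qed.

Lemma Es_tail x eps : 0 < eps -> exists N, forall n, (N <= n)%nat -> exp x - Es n x < eps.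
Proof.
  intros He. destruct (Es_cv x eps He) as [N HN]. exists N. intros n Hn.
  specialize (HN n Hn). unfold R_dist in HN. apply Rabs_def2 in HN. lra.
Qed.

Definition Tb R0 phi0 n a := Kc R0 phi0 / Lc R0 phi0 * (exp (Lc R0 phi0 * a) - Es n (Lc R0 phi0 * a)).

Lemma pic_cb R0 phi0 n m s a : 0 < R0 -> (n <= m)%nat -> Rabs (s - R0) <= a ->
  Rabs (pic R0 phi0 m s - pic R0 phi0 n s) <=
  Kc R0 phi0 / Lc R0 phi0 * (Es m (Lc R0 phi0 * a) - Es n (Lc R0 phi0 * a)).
Proof.
  intros HR Hnm Ha. pose proof (Kc_pos R0 phi0 HR). pose proof (Lc_pos R0 phi0 HR).
  induction Hnm.
  - rewrite !Rminus_diag, Rabs_R0, Rmult_0_r. lra.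
  - replace (pic R0 phi0 (S m) s - pic R0 phi0 n s) with
      ((pic R0 phi0 (S m) s - pic R0 phi0 m s) + (pic R0 phi0 m s - pic R0 phi0 n s)) by ring.
    eapply Rle_trans; [apply Rabs_triang|].
    rewrite Es_S.
    assert (Hd : Rabs (pic R0 phi0 (S m) s - pic R0 phi0 m s) <=
       Kc R0 phi0 / Lc R0 phi0 * (/ INR (Factorial.fact (S m)) * (Lc R0 phi0 * a) ^ S m)).
    { eapply Rle_trans; [apply pic_diff; auto|].
      assert (Hp : Rabs (s - R0) ^ S m <= a ^ S m) by (apply pow_incr; split; [apply Rabs_pos|auto]).
      rewrite Rpow_mult_distr. change (Lc R0 phi0 ^ S m) with (Lc R0 phi0 * Lc R0 phi0 ^ m).
      pose proof (INR_fact_lt_0 (S m)).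
      assert (0 <= Lc R0 phi0 ^ m) by (apply pow_le; lra).
      set (F := INR (Factorial.fact (S m))) in *. set (P := Lc R0 phi0 ^ m) in *.
      set (X := Rabs (s - R0) ^ S m) in *. set (Y := a ^ S m) in *.
      clearbody F P X Y.
      replace (Kc R0 phi0 / Lc R0 phi0 * (/ F * (Lc R0 phi0 * P * Y))) with
        (Kc R0 phi0 * P * Y / F) by (field; lra).
      unfold Rdiv. apply Rmult_le_compat_r; [left; apply Rinv_0_lt_compat; lra|].
      apply Rmult_le_compat_l; auto. apply Rmult_le_pos; lra. }
    lra.
Qed.

Lemma pic_Tb R0 phi0 n m s a : 0 < R0 -> (n <= m)%nat -> Rabs (s - R0) <= a ->
  Rabs (pic R0 phi0 m s - pic R0 phi0 n s) <= Tb R0 phi0 n a.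
Proof.
  intros HR Hnm Ha. pose proof (Kc_pos R0 phi0 HR). pose proof (Lc_pos R0 phi0 HR).
  eapply Rle_trans; [apply pic_cb; eauto|]. unfold Tb.
  apply Rmult_le_compat_l. apply Rlt_le, Rdiv_lt_0_compat; lra.
  assert (0 <= a) by (pose proof (Rabs_pos (s - R0)); lra).
  pose proof (Es_le_exp m (Lc R0 phi0 * a) ltac:(nra)). lra.
Qed.

Lemma Tb_small R0 phi0 a eps : 0 < R0 -> 0 < eps ->
  exists N, forall n, (N <= n)%nat -> Tb R0 phi0 n a < eps.
Proof.
  intros HR He. pose proof (Kc_pos R0 phi0 HR). pose proof (Lc_pos R0 phi0 HR).
  destruct (Es_tail (Lc R0 phi0 * a) (eps * Lc R0 phi0 / Kc R0 phi0)) as [N HN].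
  { apply Rdiv_lt_0_compat; nra. }
  exists N. intros n Hn. specialize (HN n Hn). unfold Tb.
  apply (Rmult_lt_compat_l (Kc R0 phi0 / Lc R0 phi0)) in HN; [|apply Rdiv_lt_0_compat; lra].
  replace (Kc R0 phi0 / Lc R0 phi0 * (eps * Lc R0 phi0 / Kc R0 phi0)) with eps in HN by (field; lra).
  exact HN.
Qed.

Definition phi (R0 phi0 r : R) : R := real (Lim_seq (fun n => pic R0 phi0 n r)).

Lemma phi_cv R0 phi0 r : 0 < R0 -> Un_cv (fun n => pic R0 phi0 n r) (phi R0 phi0 r).
Proof.
  intros HR.
  assert (Hc : Cauchy_crit (fun n => pic R0 phi0 n r)).
  { intros eps He. destruct (Tb_small R0 phi0 (Rabs (r - R0)) eps HR He) as [N HN].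
    exists N. intros n m Hn Hm. unfold R_dist.
    destruct (Nat.le_gt_cases n m) as [Hnm|Hnm].
    - rewrite Rabs_minus_sym. eapply Rle_lt_trans; [apply (pic_Tb R0 phi0 n m r (Rabs (r - R0))); auto; lra|]. apply HN; auto.
    - eapply Rle_lt_trans; [apply (pic_Tb R0 phi0 m n r (Rabs (r - R0))); auto; [lia|lra]|]. apply HN; auto. }
  destruct (Rcomplete.R_complete _ Hc) as [l Hl].
  assert (Hlim : Lim_seq (fun n => pic R0 phi0 n r) = l).
  { apply is_lim_seq_unique. apply is_lim_seq_Reals. exact Hl. }
  unfold phi. rewrite Hlim. exact Hl.
Qed.

Lemma phi_tail R0 phi0 n s a : 0 < R0 -> Rabs (s - R0) <= a ->
  Rabs (phi R0 phi0 s - pic R0 phi0 n s) <= Tb R0 phi0 n a.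
Proof.
  intros HR Ha. apply le_epsilon. intros eps He.
  destruct (phi_cv R0 phi0 s HR eps He) as [N HN].
  specialize (HN (max N n) (Nat.le_max_l _ _)). unfold R_dist in HN.
  pose proof (pic_Tb R0 phi0 n (max N n) s a HR (Nat.le_max_r _ _) Ha).
  replace (phi R0 phi0 s - pic R0 phi0 n s) with
    ((pic R0 phi0 (max N n) s - pic R0 phi0 n s) - (pic R0 phi0 (max N n) s - phi R0 phi0 s)) by ring.
  eapply Rle_trans; [apply Rabs_triang|]. rewrite Rabs_Ropp. lra.
Qed.

Lemma phi_lip R0 phi0 x y : 0 < R0 ->
  Rabs (phi R0 phi0 x - phi R0 phi0 y) <= Kc R0 phi0 * Rabs (x - y).
Proof.
  intros HR. apply le_epsilon. intros eps He.
  destruct (Tb_small R0 phi0 (Rabs (x - R0)) (eps / 2) HR ltac:(lra)) as [N1 H1].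
  destruct (Tb_small R0 phi0 (Rabs (y - R0)) (eps / 2) HR ltac:(lra)) as [N2 H2].
  set (n := max N1 N2).
  pose proof (phi_tail R0 phi0 n x _ HR (Rle_refl _)).
  pose proof (phi_tail R0 phi0 n y _ HR (Rle_refl _)).
  specialize (H1 n (Nat.le_max_l _ _)). specialize (H2 n (Nat.le_max_r _ _)).
  pose proof (proj1 (pic_lip_cont R0 phi0 n HR) x y).
  replace (phi R0 phi0 x - phi R0 phi0 y) with
    ((phi R0 phi0 x - pic R0 phi0 n x) + (pic R0 phi0 n x - pic R0 phi0 n y) - (phi R0 phi0 y - pic R0 phi0 n y)) by ring.
  eapply Rle_trans; [apply Rabs_triang|]. rewrite Rabs_Ropp.
  pose proof (Rabs_triang (phi R0 phi0 x - pic R0 phi0 n x) (pic R0 phi0 n x - pic R0 phi0 n y)).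
  lra.
Qed.

Lemma phi_cont R0 phi0 x : 0 < R0 -> continuous (phi R0 phi0) x.
Proof.
  intros HR. apply (lip_cont _ _ (Kc R0 phi0)). pose proof (Kc_pos R0 phi0 HR); lra.
  intros y. apply phi_lip; auto.
Qed.

Lemma Gphi_cont R0 phi0 x : 0 < R0 -> continuous (fun s => G R0 phi0 s (phi R0 phi0 s)) x.
Proof. intros H. apply G_cont; auto. apply phi_cont; auto. Qed.

Lemma Gphi_ex R0 phi0 a b : 0 < R0 -> ex_RInt (fun s => G R0 phi0 s (phi R0 phi0 s)) a b.
Proof. intros H. apply (ex_RInt_continuous (V:=R_CompleteNormedModule)). intros; apply Gphi_cont; auto. Qed.

Lemma phi_int R0 phi0 r : 0 < R0 ->
  phi R0 phi0 r = phi0 + RInt (fun s => G R0 phi0 s (phi R0 phi0 s)) R0 r.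
Proof.
  intros HR. pose proof (Lc_pos R0 phi0 HR) as HL.
  set (a := Rabs (r - R0)). assert (Ha : 0 <= a) by apply Rabs_pos.
  apply Rminus_diag_uniq. apply Rabs_eq_0. apply Rle_antisym; [|apply Rabs_pos].
  apply le_epsilon. intros eps He. rewrite Rplus_0_l.
  set (e' := eps / (1 + Lc R0 phi0 * a)).
  assert (He' : 0 < e') by (apply Rdiv_lt_0_compat; nra).
  destruct (Tb_small R0 phi0 a e' HR He') as [N HN].
  pose proof (HN N (le_n _)) as HN1. pose proof (HN (S N) (le_S _ _ (le_n _))) as HN2.
  pose proof (phi_tail R0 phi0 (S N) r a HR (Rle_refl _)) as Ht.
  assert (Hi : Rabs (RInt (fun s => G R0 phi0 s (pic R0 phi0 N s)) R0 r -
                     RInt (fun s => G R0 phi0 s (phi R0 phi0 s)) R0 r) <= Lc R0 phi0 * Tb R0 phi0 N a * a).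
  { assert (HM : RInt (fun x => G R0 phi0 x (pic R0 phi0 N x) - G R0 phi0 x (phi R0 phi0 x)) R0 r =
       RInt (fun x => G R0 phi0 x (pic R0 phi0 N x)) R0 r - RInt (fun x => G R0 phi0 x (phi R0 phi0 x)) R0 r).
    { apply (RInt_minus (V:=R_CompleteNormedModule)); [apply Gpic_ex|apply Gphi_ex]; auto. }
    rewrite <- HM. apply RInt_bound.
    - intros t. apply (continuous_minus (fun s => G R0 phi0 s (pic R0 phi0 N s))
                        (fun s => G R0 phi0 s (phi R0 phi0 s))); [apply Gpic_cont|apply Gphi_cont]; auto.
    - intros t Ht'. eapply Rle_trans; [apply G_lip; auto|].
      apply Rmult_le_compat_l; [lra|]. rewrite Rabs_minus_sym. apply phi_tail; auto.
      unfold a. unfold Rmin, Rmax in Ht'. destruct Rle_dec in Ht';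
      unfold Rabs; repeat destruct Rcase_abs; lra. }
  change (pic R0 phi0 (S N) r) with (phi0 + RInt (fun s => G R0 phi0 s (pic R0 phi0 N s)) R0 r) in Ht.
  replace (phi R0 phi0 r - (phi0 + RInt (fun s => G R0 phi0 s (phi R0 phi0 s)) R0 r)) with
    ((phi R0 phi0 r - (phi0 + RInt (fun s => G R0 phi0 s (pic R0 phi0 N s)) R0 r)) +
     (RInt (fun s => G R0 phi0 s (pic R0 phi0 N s)) R0 r - RInt (fun s => G R0 phi0 s (phi R0 phi0 s)) R0 r)) by ring.
  eapply Rle_trans; [apply Rabs_triang|].
  assert (Lc R0 phi0 * Tb R0 phi0 N a * a <= Lc R0 phi0 * a * e').
  { assert (0 <= Tb R0 phi0 N a). { eapply Rle_trans; [apply Rabs_pos|apply (phi_tail R0 phi0 N r a HR (Rle_refl _))]. }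
    replace (Lc R0 phi0 * Tb R0 phi0 N a * a) with ((Lc R0 phi0 * a) * Tb R0 phi0 N a) by ring. apply Rmult_le_compat_l; [nra|lra]. }
  assert (e' + Lc R0 phi0 * a * e' = eps) by (unfold e'; field; nra).
  lra.
Qed.

Lemma phi_R0 R0 phi0 : 0 < R0 -> phi R0 phi0 R0 = phi0.
Proof.
  intros HR. rewrite phi_int by auto. rewrite RInt_point. change (@zero R_CompleteNormedModule) with 0. ring.
Qed.

Lemma phi_deriv R0 phi0 r : 0 < R0 -> is_derive (phi R0 phi0) r (G R0 phi0 r (phi R0 phi0 r)).
Proof.
  intros HR.
  apply (is_derive_ext (fun r => phi0 + RInt (fun s => G R0 phi0 s (phi R0 phi0 s)) R0 r)).
  { intros t. symmetry. apply phi_int; auto. }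
  evar_last.
  - apply @is_derive_plus. apply is_derive_const.
    apply (is_derive_RInt (V:=R_CompleteNormedModule) (fun s => G R0 phi0 s (phi R0 phi0 s)) _ R0).
    + apply filter_forall. intros b. apply (RInt_correct (V:=R_CompleteNormedModule)). apply Gphi_ex; auto.
    + apply Gphi_cont; auto.
  - change (plus 0 (G R0 phi0 r (phi R0 phi0 r)) = G R0 phi0 r (phi R0 phi0 r)).
    unfold plus; simpl; ring.
Qed.

Definition m0 (R0 phi0 : R) := Rmin phi0 (2 / coth R0).

Lemma m0_pos R0 phi0 : 0 < R0 -> 0 < phi0 -> 0 < m0 R0 phi0.
Proof.
  intros. unfold m0. pose proof (coth_gt1 R0 H). apply Rmin_glb_lt; auto.
  apply Rdiv_lt_0_compat; lra.
Qed.

Lemma phi_upper R0 phi0 r : 0 < R0 -> 0 < phi0 -> R0 <= r -> phi R0 phi0 r <= Mc phi0.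
Proof.
  intros HR Hp Hr.
  apply (barrier (phi R0 phi0) (fun x => G R0 phi0 x (phi R0 phi0 x)) R0 r); auto.
  - intros; apply phi_deriv; auto.
  - rewrite phi_R0 by auto. unfold Mc. pose proof (Rmax_l (2 * phi0) 2). lra.
  - intros x Hx Hc. unfold G. pose proof (Mc_ge2 phi0).
    rewrite clamp_top by lra.
    assert (1 < coth (Rmax (R0 / 2) x)).
    { apply coth_gt1. apply Rlt_le_trans with (R0/2); [lra|apply Rmax_l]. }
    unfold Fp. assert (0 < 1 + Mc phi0 ^ 2) by nra.
    assert (2 - Mc phi0 * coth (Rmax (R0 / 2) x) <= 0) by nra. nra.
Qed.

Lemma phi_lower R0 phi0 r : 0 < R0 -> 0 < phi0 -> R0 <= r -> m0 R0 phi0 <= phi R0 phi0 r.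
Proof.
  intros HR Hp Hr.
  cut (- phi R0 phi0 r <= - m0 R0 phi0); [lra|].
  apply (barrier (fun x => - phi R0 phi0 x) (fun x => - G R0 phi0 x (phi R0 phi0 x)) R0 r); auto.
  - intros x _. apply @is_derive_opp. apply phi_deriv; auto.
  - rewrite phi_R0 by auto. unfold m0. pose proof (Rmin_l phi0 (2 / coth R0)). lra.
  - intros x Hx Hc. unfold G. pose proof (Mc_ge2 phi0). pose proof (m0_pos R0 phi0 HR Hp).
    pose proof (clamp_range (Mc phi0) (phi R0 phi0 x) ltac:(lra)).
    pose proof (clamp_le (Mc phi0) (phi R0 phi0 x) ltac:(lra)).
    assert (Hu : clamp (Mc phi0) (phi R0 phi0 x) <= m0 R0 phi0).
    { unfold Rmax in H2. destruct Rle_dec in H2; lra. }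
    rewrite Rmax_right by lra.
    pose proof (coth_gt1 x ltac:(lra)). pose proof (coth_decr x R0 HR (proj1 Hx)).
    pose proof (coth_gt1 R0 HR).
    assert (Hm : m0 R0 phi0 * coth R0 <= 2).
    { unfold m0. pose proof (Rmin_r phi0 (2 / coth R0)).
      apply (Rmult_le_compat_r (coth R0)) in H6; [|lra].
      replace (2 / coth R0 * coth R0) with 2 in H6 by (field; lra). lra. }
    unfold Fp. set (u := clamp (Mc phi0) (phi R0 phi0 x)) in *.
    assert (u * coth x <= 2) by nra. assert (0 < 1 + u ^ 2) by nra. nra.
Qed.

Lemma G_eq R0 phi0 x y : 0 < R0 -> R0 / 2 <= x -> 0 <= y <= Mc phi0 ->
  G R0 phi0 x y = Fp (coth x) y.
Proof. intros. unfold G. rewrite Rmax_right by lra. rewrite clamp_id; auto. Qed.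

Definition epsc (R0 phi0 : R) := Rmin (R0 / 2) (phi0 / (2 * Kc R0 phi0)).

Lemma epsc_pos R0 phi0 : 0 < R0 -> 0 < phi0 -> 0 < epsc R0 phi0.
Proof.
  intros. unfold epsc. pose proof (Kc_pos R0 phi0 H). apply Rmin_glb_lt; [lra|].
  apply Rdiv_lt_0_compat; lra.
Qed.

Lemma phi_ode R0 phi0 x : 0 < R0 -> 0 < phi0 -> R0 - epsc R0 phi0 < x ->
  0 < x /\ is_derive (phi R0 phi0) x (Fp (coth x) (phi R0 phi0 x)).
Proof.
  intros HR Hp Hx. pose proof (Kc_pos R0 phi0 HR). pose proof (Mc_ge2 phi0).
  assert (He1 : epsc R0 phi0 <= R0 / 2) by apply Rmin_l.
  assert (He2 : epsc R0 phi0 <= phi0 / (2 * Kc R0 phi0)) by apply Rmin_r.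
  split; [lra|].
  rewrite <- (G_eq R0 phi0); auto; [apply phi_deriv; auto|lra|].
  destruct (Rle_dec R0 x).
  - pose proof (phi_upper R0 phi0 x HR Hp r). pose proof (phi_lower R0 phi0 x HR Hp r).
    pose proof (m0_pos R0 phi0 HR Hp). lra.
  - pose proof (phi_lip R0 phi0 x R0 HR). rewrite phi_R0 in H1 by auto.
    assert (Rabs (x - R0) <= epsc R0 phi0) by (rewrite Rabs_left; lra).
    assert (Kc R0 phi0 * Rabs (x - R0) <= phi0 / 2).
    { apply Rle_trans with (Kc R0 phi0 * (phi0 / (2 * Kc R0 phi0))).
      apply Rmult_le_compat_l; lra. right; field; lra. }
    apply Rabs_le_between in H1.
    unfold Mc. pose proof (Rmax_l (2 * phi0) 2). lra.
Qed.

(* expressions in (coth x, phi x) *)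
Inductive pex := EC (c : R) | EY | ET | EA (a b : pex) | EM (a b : pex).

Fixpoint ev (e : pex) (t y : R) : R :=
  match e with
  | EC c => c | EY => y | ET => t
  | EA a b => ev a t y + ev b t y
  | EM a b => ev a t y * ev b t y
  end.

Definition EF := EM (EA (EC 1) (EM EY EY)) (EA (EC 2) (EM (EC (-1)) (EM EY ET))).

Fixpoint dE (e : pex) : pex :=
  match e with
  | EC _ => EC 0
  | EY => EF
  | ET => EA (EC 1) (EM (EC (-1)) (EM ET ET))
  | EA a b => EA (dE a) (dE b)
  | EM a b => EA (EM (dE a) b) (EM a (dE b))
  end.

Lemma ev_derive (f : R -> R) x e : 0 < x -> is_derive f x (Fp (coth x) (f x)) ->
  is_derive (fun s => ev e (coth s) (f s)) x (ev (dE e) (coth x) (f x)).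
Proof.
  intros Hx Hf. induction e; simpl.
  - apply (is_derive_const (K:=R_AbsRing) (V:=R_NormedModule)).
  - evar_last; [exact Hf|]. unfold Fp. ring.
  - evar_last; [apply coth_derive; auto|]. ring.
  - apply @is_derive_plus; auto.
  - evar_last; [apply (is_derive_mult (fun s => ev e1 (coth s) (f s)) (fun s => ev e2 (coth s) (f s))); [exact IHe1|exact IHe2|intros; apply Rmult_comm]|].
    simpl. unfold plus, mult; simpl. ring.
Qed.

Lemma phi_smooth R0 phi0 : 0 < R0 -> 0 < phi0 -> smooth_on_half_line R0 (phi R0 phi0).
Proof.
  intros HR Hp. exists (epsc R0 phi0). split; [apply epsc_pos; auto|].
  set (g := fun n x => ev (Nat.iter n dE EY) (coth x) (phi R0 phi0 x)).
  assert (Hloc : forall x, R0 - epsc R0 phi0 < x -> locally x (fun y => R0 - epsc R0 phi0 < y)).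
  { intros x Hx. apply (locally_open (fun y => R0 - epsc R0 phi0 < y)); auto. apply open_gt. }
  assert (HD : forall n x, R0 - epsc R0 phi0 < x -> Derive_n (phi R0 phi0) n x = g n x).
  { induction n as [|n IH]; intros x Hx.
    - reflexivity.
    - simpl. destruct (phi_ode R0 phi0 x HR Hp Hx) as [Hx0 Hd].
      rewrite (Derive_ext_loc _ (g n)).
      + apply is_derive_unique. unfold g. apply ev_derive; auto.
      + eapply filter_imp; [|apply Hloc; eauto]. intros y Hy. apply IH; auto. }
  intros n x Hx. destruct n; [exact I|]. simpl.
  destruct (phi_ode R0 phi0 x HR Hp Hx) as [Hx0 Hd].
  apply (ex_derive_ext_loc (g n)).
  + eapply filter_imp; [|apply Hloc; eauto]. intros y Hy. symmetry. apply HD; auto.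
  + eexists. unfold g. apply ev_derive; auto.
Qed.

Lemma phi_ode_fwd R0 phi0 x : 0 < R0 -> 0 < phi0 -> R0 <= x ->
  is_derive (phi R0 phi0) x ((1 + (phi R0 phi0 x) ^ 2) * (2 - phi R0 phi0 x * coth x)).
Proof.
  intros HR Hp Hx. apply (phi_ode R0 phi0 x HR Hp). pose proof (epsc_pos R0 phi0 HR Hp). lra.
Qed.

Lemma uniq R0 phi0 (psi : R -> R) : 0 < R0 -> 0 < phi0 -> solves_ivp R0 phi0 psi ->
  forall r, R0 <= r -> psi r = phi R0 phi0 r.
Proof.
  intros HR Hp [Hpsi0 Hpsi] r Hr.
  set (ph := phi R0 phi0).
  assert (Hc : forall c, R0 <= c <= r -> continuity_pt (fun x => Rabs (psi x)) c).
  { intros c Hc. apply continuity_pt_filterlim. apply continuous_Rabs_comp.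
    apply (@ex_derive_continuous R_AbsRing R_NormedModule psi). eexists. apply Hpsi; lra. }
  destruct (continuity_ab_maj _ R0 r Hr Hc) as [Mx [HMx _]].
  set (B := Rmax (Rabs (psi Mx)) (Mc phi0)).
  set (C0 := coth R0).
  set (L := 4 * B + C0 + 3 * C0 * B ^ 2).
  assert (HB1 : forall x, R0 <= x <= r -> Rabs (psi x) <= B).
  { intros x Hx. eapply Rle_trans; [apply HMx; auto|apply Rmax_l]. }
  assert (HB2 : forall x, R0 <= x <= r -> Rabs (ph x) <= B).
  { intros x Hx. pose proof (phi_upper R0 phi0 x HR Hp (proj1 Hx)). pose proof (phi_lower R0 phi0 x HR Hp (proj1 Hx)).
    pose proof (m0_pos R0 phi0 HR Hp). rewrite Rabs_pos_eq by (unfold ph; lra).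
    eapply Rle_trans; [|apply Rmax_r]. unfold ph; lra. }
  assert (HL : 0 <= L).
  { unfold L. assert (0 <= B) by (eapply Rle_trans; [apply Rabs_pos|apply Rmax_l]).
    pose proof (coth_gt1 R0 HR). unfold C0. nra. }
  set (g := fun x => exp (- (2 * L) * x) * (psi x - ph x) ^ 2).
  assert (Hg : forall x, R0 <= x <= r -> is_derive g x
     (exp (- (2 * L) * x) * (- (2 * L)) * (psi x - ph x) ^ 2 +
      exp (- (2 * L) * x) * (2 * (psi x - ph x) *
        (Fp (coth x) (psi x) - Fp (coth x) (ph x))))).
  { intros x Hx.
    assert (Hd : is_derive (fun x => psi x - ph x) x (Fp (coth x) (psi x) - Fp (coth x) (ph x))).
    { apply @is_derive_minus. apply Hpsi; lra. apply phi_ode_fwd; lra. }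
    assert (He : is_derive (fun x => exp (- (2 * L) * x)) x (exp (- (2 * L) * x) * (- (2 * L)))).
    { auto_derive; auto. ring. }
    assert (Hq : is_derive (fun x => (psi x - ph x) ^ 2) x (INR 2 * (Fp (coth x) (psi x) - Fp (coth x) (ph x)) * (psi x - ph x) ^ Init.Nat.pred 2)).
    { apply (is_derive_pow (fun x => psi x - ph x) 2 x _ Hd). }
    unfold g. evar_last.
    - apply (is_derive_mult (fun x => exp (- (2 * L) * x)) (fun x => (psi x - ph x) ^ 2)); [exact He|exact Hq|intros; apply Rmult_comm].
    - simpl. unfold plus, mult; simpl. ring. }
  assert (Hneg : forall x, R0 <= x <= r ->
     exp (- (2 * L) * x) * (- (2 * L)) * (psi x - ph x) ^ 2 +
      exp (- (2 * L) * x) * (2 * (psi x - ph x) *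
        (Fp (coth x) (psi x) - Fp (coth x) (ph x))) <= 0).
  { intros x Hx.
    assert (Hlip : Rabs (Fp (coth x) (psi x) - Fp (coth x) (ph x)) <= L * Rabs (psi x - ph x)).
    { unfold L. apply Fp_lip; auto. pose proof (coth_gt1 x ltac:(lra)). pose proof (coth_decr x R0 HR (proj1 Hx)).
      unfold C0; lra. }
    set (d := psi x - ph x) in *. set (D := Fp (coth x) (psi x) - Fp (coth x) (ph x)) in *.
    assert (d * D <= L * d ^ 2).
    { assert (d * D <= Rabs (d * D)) by apply RRle_abs. rewrite Rabs_mult in H.
      assert (Rabs d * Rabs D <= Rabs d * (L * Rabs d)) by (apply Rmult_le_compat_l; auto; apply Rabs_pos).
      assert (Rabs d * Rabs d = d ^ 2) by (unfold Rabs; destruct Rcase_abs; ring). nra. }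
    pose proof (exp_pos (- (2 * L) * x)). nra. }
  pose proof (decr_lemma g _ R0 r Hr Hg Hneg) as Hdec.
  unfold g in Hdec. rewrite Hpsi0 in Hdec. unfold ph in Hdec. rewrite phi_R0 in Hdec by auto.
  rewrite Rminus_diag in Hdec. simpl in Hdec. rewrite !Rmult_0_l, Rmult_0_r in Hdec.
  pose proof (exp_pos (- (2 * L) * r)).
  assert ((psi r - phi R0 phi0 r) ^ 2 <= 0).
  { apply (Rmult_le_reg_l (exp (- (2 * L) * r))); auto. lra. }
  set (d := psi r - phi R0 phi0 r) in *. assert (d * d <= 0) by (simpl in H0; lra).
  assert (Hdd : Rsqr d = 0) by (pose proof (Rle_0_sqr d); unfold Rsqr in *; lra). apply Rsqr_eq_0 in Hdd. unfold ph. unfold d in Hdd. lra.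
Qed.

Lemma Fp_neg t p e : 1 <= t -> 2 + e < p -> 0 < e -> Fp t p + e <= 0.
Proof.
  intros Ht Hp He. unfold Fp.
  assert (2 - p * t <= 2 - p) by nra. assert (1 <= 1 + p ^ 2) by nra.
  assert ((1 + p ^ 2) * (2 - p * t) <= 2 - p * t) by nra. lra.
Qed.

Lemma lim_upper R0 phi0 e : 0 < R0 -> 0 < phi0 -> 0 < e ->
  exists X, forall x, X <= x -> phi R0 phi0 x <= 2 + e.
Proof.
  intros HR Hp He.
  assert (Hd : forall x, R0 <= x -> is_derive (phi R0 phi0) x (Fp (coth x) (phi R0 phi0 x))).
  { intros x Hx. apply (phi_ode_fwd R0 phi0 x HR Hp Hx). }
  assert (Hct : forall x, R0 <= x -> 1 <= coth x).
  { intros x Hx. left. apply coth_gt1. lra. }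
  assert (H1 : exists x1, R0 <= x1 /\ phi R0 phi0 x1 <= 2 + e).
  { apply NNPP. intros Hn.
    assert (Hall : forall x, R0 <= x -> 2 + e < phi R0 phi0 x).
    { intros x Hx. apply Rnot_le_lt. intros Hle. apply Hn. exists x; auto. }
    set (T := phi0 / e).
    assert (HT : 0 < T) by (apply Rdiv_lt_0_compat; auto).
    pose proof (decr_lemma (fun x => phi R0 phi0 x + e * x) (fun x => Fp (coth x) (phi R0 phi0 x) + e) R0 (R0 + T)
      ltac:(lra)) as Hdec.
    assert (phi R0 phi0 (R0 + T) + e * (R0 + T) <= phi R0 phi0 R0 + e * R0).
    { apply Hdec.
      - intros x Hx. apply @is_derive_plus. apply Hd; lra.
        evar_last. apply is_derive_scal. apply (is_derive_id (K:=R_AbsRing)). simpl. unfold scal, mult, one; simpl. unfold mult; simpl. ring.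
      - intros x Hx. apply Fp_neg; auto. apply Hct; lra. apply Hall; lra. }
    rewrite phi_R0 in H by auto.
    assert (e * T = phi0) by (unfold T; field; lra).
    pose proof (Hall (R0 + T) ltac:(lra)). lra. }
  destruct H1 as [x1 [Hx1 Hp1]]. exists x1. intros x Hx.
  apply (barrier (phi R0 phi0) (fun x => Fp (coth x) (phi R0 phi0 x)) x1 x); auto.
  - intros y Hy. apply Hd; lra.
  - intros y Hy Hc. pose proof (Fp_neg (coth y) (phi R0 phi0 y) e (Hct y ltac:(lra)) Hc He). lra.
Qed.

Lemma lim_lower R0 phi0 e : 0 < R0 -> 0 < phi0 -> 0 < e -> e <= 1 ->
  exists X, forall x, X <= x -> 2 - e <= phi R0 phi0 x.
Proof.
  intros HR Hp He He1.
  assert (Hd : forall x, R0 <= x -> is_derive (phi R0 phi0) x (Fp (coth x) (phi R0 phi0 x))).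
  { intros x Hx. apply (phi_ode_fwd R0 phi0 x HR Hp Hx). }
  pose proof (m0_pos R0 phi0 HR Hp) as Hm0.
  set (X0 := Rmax R0 (1 / (e / 4))).
  assert (HX0 : R0 <= X0) by apply Rmax_l.
  assert (HX1 : 1 / (e / 4) <= X0) by apply Rmax_r.
  assert (Key : forall y, X0 <= y -> phi R0 phi0 y < 2 - e -> e / 2 <= Fp (coth y) (phi R0 phi0 y)).
  { intros y Hy Hlt.
    pose proof (coth_small (e / 4) y ltac:(lra) ltac:(lra) ltac:(lra)).
    pose proof (coth_gt1 y ltac:(lra)).
    pose proof (phi_lower R0 phi0 y HR Hp ltac:(lra)).
    set (p := phi R0 phi0 y) in *. set (t := coth y) in *. unfold Fp.
    assert (p * t <= (2 - e) * t) by nra.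
    assert ((2 - e) * t <= (2 - e) * (1 + e / 4)) by nra.
    assert (e / 2 <= 2 - p * t) by nra.
    assert (1 <= 1 + p ^ 2) by nra. nra. }
  assert (H1 : exists x2, X0 <= x2 /\ 2 - e <= phi R0 phi0 x2).
  { apply NNPP. intros Hn.
    assert (Hall : forall x, X0 <= x -> phi R0 phi0 x < 2 - e).
    { intros x Hx. apply Rnot_le_lt. intros Hle. apply Hn. exists x; auto. }
    set (T := 4 / e).
    assert (HT : 0 < T) by (apply Rdiv_lt_0_compat; lra).
    pose proof (decr_lemma (fun x => - phi R0 phi0 x + e / 2 * x) (fun x => - Fp (coth x) (phi R0 phi0 x) + e / 2) X0 (X0 + T)
      ltac:(lra)) as Hdec.
    assert (- phi R0 phi0 (X0 + T) + e / 2 * (X0 + T) <= - phi R0 phi0 X0 + e / 2 * X0).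
    { apply Hdec.
      - intros x Hx. apply @is_derive_plus. apply @is_derive_opp. apply Hd; lra.
        evar_last. apply is_derive_scal. apply (is_derive_id (K:=R_AbsRing)). simpl. unfold scal, mult, one; simpl. unfold mult; simpl. ring.
      - intros x Hx. pose proof (Key x ltac:(lra) (Hall x ltac:(lra))). lra. }
    assert (e / 2 * T = 2) by (unfold T; field; lra).
    pose proof (Hall (X0 + T) ltac:(lra)). pose proof (phi_lower R0 phi0 X0 HR Hp HX0). lra. }
  destruct H1 as [x2 [Hx2 Hp2]]. exists x2. intros x Hx.
  cut (- phi R0 phi0 x <= - (2 - e)); [lra|].
  apply (barrier (fun x => - phi R0 phi0 x) (fun x => - Fp (coth x) (phi R0 phi0 x)) x2 x); auto.
  - intros y Hy. apply @is_derive_opp. apply Hd; lra.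
  - lra.
  - intros y Hy Hc. pose proof (Key y ltac:(lra) ltac:(lra)). lra.
Qed.

Lemma phi_lim R0 phi0 : 0 < R0 -> 0 < phi0 -> is_lim (phi R0 phi0) p_infty 2.
Proof.
  intros HR Hp. apply is_lim_spec. intros eps.
  set (e := Rmin (eps / 2) 1).
  assert (He : 0 < e) by (apply Rmin_glb_lt; [destruct eps; simpl; lra|lra]).
  assert (He1 : e <= 1) by apply Rmin_r.
  assert (He2 : e < eps) by (pose proof (Rmin_l (eps / 2) 1); destruct eps; simpl in *; unfold e in *; lra).
  destruct (lim_upper R0 phi0 e HR Hp He) as [X1 H1].
  destruct (lim_lower R0 phi0 e HR Hp He He1) as [X2 H2].
  exists (Rmax X1 X2). intros x Hx.
  pose proof (H1 x ltac:(pose proof (Rmax_l X1 X2); lra)).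
  pose proof (H2 x ltac:(pose proof (Rmax_r X1 X2); lra)).
  apply Rabs_lt_between'. lra.
Qed.

Theorem lemma4p1 (R0 phi0 : R) (hR : 0 < R0) (hphi0 : 0 < phi0) :
  exists phi : R -> R,
    smooth_on_half_line R0 phi /\ solves_ivp R0 phi0 phi /\
    (forall psi : R -> R,
       smooth_on_half_line R0 psi -> solves_ivp R0 phi0 psi ->
       forall r : R, R0 <= r -> psi r = phi r) /\
    is_lim phi p_infty 2.
Proof.
  exists (phi R0 phi0). split; [|split; [|split]].
  - apply phi_smooth; auto.
  - split. apply phi_R0; auto. intros r Hr. apply phi_ode_fwd; auto.
  - intros psi _ Hs r Hr. apply uniq; auto.
  - apply phi_lim; auto.
Qed.
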